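(* Let $t>0$ and $k$ be integers. If there is a wall on $t$ colors whose graph has no clique on $k$ vertices, then there is a wall on $t-1$ colors whose graph has no clique on $k$ vertices.
   Context: An interval graph $G=(V,E)$ comes with an interval representation $v\mapsto I_v$ (intervals of $\mathbb{R}$, distinct $u,v$ adjacent iff $I_u\cap I_v\ne\emptyset$); graphs are finite. $N[v]$ is the closed neighborhood of $v$ and $f(U)$ the image of $U$. A wall is a pair $(G,f)$ where $G$ is an interval graph on vertex set $V$ with a given interval representation, $f\colon V\to\{1,2,\dots\}$ is a proper coloring of $G$, and $f(N[v])\supseteq\{1,\dots,f(v)\}$ for every $v\in V$. It is a wall on $t$ colors if $|f(V)|=t$. *)

(* Defs.v *)
From Stdlib Require Import Reals.
From mathcomp Require Import all_boot.
Set Implicit Arguments. Unset Strict Implicit. Unset Printing Implicit Defensive.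

(* An interval representation of a graph on the finite vertex type V:
   vertex v is the closed interval [l v, r v] of the real line (l v <= r v). *)
Definition interval_rep (V : finType) (l r : V -> R) : Prop :=
  forall v, Rle (l v) (r v).

Definition iadj (V : finType) (l r : V -> R) (u v : V) : Prop :=
  u <> v /\ Rle (Rmax (l u) (l v)) (Rmin (r u) (r v)).

Definition in_closed_nbhd (V : finType) (l r : V -> R) (v w : V) : Prop :=
  w = v \/ iadj l r v w.

Definition is_wall (V : finType) (l r : V -> R) (f : V -> nat) : Prop :=
  [/\ interval_rep l r,
      (forall v, 1 <= f v)%N,
      (forall u v, iadj l r u v -> f u <> f v)
    & (forall v c, (1 <= c <= f v)%N ->
         exists w, in_closed_nbhd l r v w /\ f w = c)].

Definition ncolors (V : finType) (f : V -> nat) : nat :=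
  size (undup [seq f v | v <- enum V]).

Definition has_clique (V : finType) (l r : V -> R) (k : nat) : Prop :=
  exists S : {set V}, #|S| = k /\
    (forall u v, u \in S -> v \in S -> u <> v -> iadj l r u v).

(* Main.v *)
Require Import Defs.
From Stdlib Require Import Reals.
From mathcomp Require Import all_boot.

Lemma count_le1 (s : seq nat) : uniq s -> 1 \in s -> all (fun c => 0 < c) s ->
  count (fun c => c <= 1) s = 1.
Proof.
move=> us s1 sp.
transitivity (count_mem 1 s); last by rewrite (count_uniq_mem 1 us) s1.
apply: eq_in_count => c cs /=.
have := allP sp c cs; case: c {cs} => [|[|c]] //.
Qed.

Theorem mainTheorem5 (t k : nat) :
  (0 < t)%N ->
  (exists (V : finType) (l r : V -> R) (f : V -> nat),
      is_wall l r f /\ ncolors f = t /\ ~ has_clique l r k) ->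
  exists (V : finType) (l r : V -> R) (f : V -> nat),
      is_wall l r f /\ ncolors f = t.-1 /\ ~ has_clique l r k.
Proof.
move=> t0 [V [l [r [f [[Hrep Hpos Hprop Hnb] [Hn Hcl]]]]]].
pose V' : finType := {v : V | (1 < f v)%N}.
pose l' := fun x : V' => l (val x).
pose r' := fun x : V' => r (val x).
pose f' := fun x : V' => (f (val x)).-1.
have adjE : forall x y : V', iadj l' r' x y <-> iadj l r (val x) (val y).
  move=> x y; rewrite /iadj /l' /r'; split=> [[H1 H2]|[H1 H2]]; split=> //.
    by move=> E; apply: H1; apply: val_inj.
  by move=> E; apply: H1; rewrite E.
exists V', l', r', f'; split; [split|split].
- by move=> x; apply: Hrep.
- by move=> [v /= hv]; rewrite /f' /=; case: (f v) hv => [|[|]].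
- move=> u v /adjE H; have := Hprop _ _ H; rewrite /f'.
  case: u v H => [u hu] [v hv] /= _.
  by case: (f u) hu => [|n] //; case: (f v) hv => [|m] // _ _ ne /= E; apply: ne; rewrite E.
- move=> [v hv] c /andP [c1 cf].
  have : (1 <= c.+1 <= f v)%N.
    by apply/andP; split=> //; move: cf; rewrite /f' /=; case: (f v) hv.
  case/Hnb=> w [Hw fw].
  have hw : (1 < f w)%N by rewrite fw.
  exists (exist _ w hw); split; last by rewrite /f' /= fw.
  case: Hw => [E|A].
    by left; apply: val_inj.
  by right; apply/adjE.
-
  rewrite -Hn /ncolors.
  set s := undup [seq f v | v <- enum V].
  have us : uniq s by apply: undup_uniq.
  have sP : forall c, (c \in s) = [exists v, f v == c].
    move=> c; rewrite mem_undup; apply/mapP/existsP => [[v _ ->]|[v /eqP <-]].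
      by exists v.
    by exists v; rewrite ?mem_enum.
  have Vne : exists v : V, true.
    move: t0; rewrite -Hn /ncolors.
    case: (pickP (fun _ : V => true)) => [v _|H]; first by exists v.
    have : #|V| = 0 by apply: eq_card0.
    by rewrite cardE => /eqP; rewrite size_eq0 => /eqP ->.
  case: Vne => v0 _.
  have s1 : 1 \in s.
    rewrite sP; have [w [_ fw]] := Hnb v0 1 (Hpos v0).
    by apply/existsP; exists w; rewrite fw.
  have sp : all (fun c => 0 < c) s.
    by apply/allP => c; rewrite sP => /existsP [v /eqP <-]; apply: Hpos.
  have -> : size (undup [seq f' v | v <- enum V'])
          = size [seq c.-1 | c <- filter (fun c => 1 < c) s].
    apply: perm_size; apply: uniq_perm.
    - exact: undup_uniq.
    - rewrite map_inj_in_uniq ?filter_uniq //.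
      move=> a b; rewrite !mem_filter => /andP [a1 _] /andP [b1 _].
      by case: a a1 => [|a] //; case: b b1 => [|b] //= _ _ ->.
    move=> x; rewrite mem_undup; apply/mapP/mapP.
      move=> [[v hv] _ ->]; exists (f v) => //.
      by rewrite mem_filter hv sP; apply/existsP; exists v.
    move=> [c]; rewrite mem_filter => /andP [c1]; rewrite sP => /existsP [v /eqP fv] ->.
    have hv : (1 < f v)%N by rewrite fv.
    by exists (exist _ v hv); rewrite ?mem_enum // /f' /= fv.
  rewrite size_map size_filter.
  have := count_predC (fun c => 1 < c) s.
  rewrite (@eq_count _ (predC (fun c => 1 < c)) (fun c => c <= 1)); last first.
    by move=> c /=; rewrite -leqNgt.
  by rewrite count_le1 // => <-; rewrite addn1.
- move=> [S [HS Hc]]; apply: Hcl.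
  exists (val @: S); split.
    by rewrite card_imset //; apply: val_inj.
  move=> u v /imsetP [x xS ->] /imsetP [y yS ->] ne.
  apply/adjE; apply: Hc => // E; apply: ne; by rewrite E.
Qed.
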